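(* Let $\mathcal B$ be finite, $\eta>0$, $Q,\tilde Q\in\mathbb R^{\mathcal B}$, $V=\eta^{-1}\log\sum_be^{\eta Q(b)}$, $\tilde V=\eta^{-1}\log\sum_be^{\eta\tilde Q(b)}$, $A=Q-V\mathbf 1$, $\tilde A=\tilde Q-\tilde V\mathbf 1$, $\nu=\exp(\eta A)$, $\tilde\nu=\exp(\eta\tilde A)$. Then for every $\xi\in\mathbb R$, $$D_{\rm TV}(\nu,\tilde\nu)\le\eta\Bigl\langle\nu,\ |\tilde Q-Q-\xi\mathbf 1|+\tfrac\eta2\exp\bigl(\eta|\tilde Q-Q-\xi\mathbf 1|\bigr)(\tilde Q-Q-\xi\mathbf 1)^2\Bigr\rangle_{\mathcal B},$$ in particular $D_{\rm TV}(\nu,\tilde\nu)\le\eta\bigl\langle\nu,|\tilde A-A|+\frac\eta2\exp(\eta|\tilde A-A|)(\tilde A-A)^2\bigr\rangle_{\mathcal B}$ (all operations entrywise). Moreover, $$D_{\rm TV}(\nu,\tilde\nu)\ge\tfrac12\bigl\langle\nu,\ \eta\exp(-\eta|\tilde A-A|)\,|\tilde A-A|\bigr\rangle_{\mathcal B},$$ and if $B_A>0$ satisfies $\max\{\|A\|_\infty,\|\tilde A\|_\infty\}\le B_A$, then $$D_{\rm TV}(\nu,\tilde\nu)\ge\frac{\eta}{2(1+2\eta B_A)}\langle\nu,|\tilde A-A|\rangle_{\mathcal B}.$$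
   Context: $D_{\rm TV}(p,q)=\frac12\|p-q\|_1$; $\langle f,g\rangle_{\mathcal B}=\sum_{b\in\mathcal B}f(b)g(b)$; $\mathbf 1$ is the all-ones vector. *)

(* Defs.v *)
From mathcomp Require Import all_boot all_order all_algebra.
From mathcomp Require Import all_classical all_reals all_analysis.
Set Implicit Arguments. Unset Strict Implicit. Unset Printing Implicit Defensive.
Import Order.TTheory GRing.Theory Num.Theory.
Local Open Scope ring_scope.

Section Defs.
Variables (R : realType) (B : finType).

Definition softV (eta : R) (Q : B -> R) : R :=
  ln (\sum_(b : B) expR (eta * Q b)) / eta.

Definition advantage (eta : R) (Q : B -> R) : B -> R :=
  fun b => Q b - softV eta Q.

Definition softpol (eta : R) (Q : B -> R) : B -> R :=
  fun b => expR (eta * advantage eta Q b).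

Definition dTV (p q : B -> R) : R := 2^-1 * \sum_(b : B) `|p b - q b|.

Definition innerB (f g : B -> R) : R := \sum_(b : B) f b * g b.

Definition supnorm (f : B -> R) : R := \big[Num.max/0]_(b : B) `|f b|.
End Defs.

(* Main.v *)
From mathcomp Require Import all_boot all_order all_algebra.
From mathcomp Require Import all_classical all_reals all_analysis.
From mathcomp Require Import ring lra.
Require Import Defs.
Import Order.TTheory GRing.Theory Num.Theory numFieldNormedType.Exports.
Local Open Scope ring_scope.
Section S.
Variable R : realType.

Lemma mvt_ge (f df : R -> R) (a b : R) : a < b ->
  (forall x : R, is_derive x (1:R) f (df x)) -> (forall x, a < x < b -> 0 <= df x) ->
  f a <= f b.
Proof.
move=> ab fd dfp.
have [] := @MVT R f df a b ab (fun x _ => fd x).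
  have cf : forall x : R, {for x, continuous f}.
    move=> x; apply: differentiable_continuous; apply/derivable1_diffP.
    by have [] := fd x.
  exact/continuous_subspaceT/cf.
move=> c; rewrite in_itv /= => /andP[ac cb] /eqP; rewrite subr_eq => /eqP ->.
rewrite lerDr mulr_ge0 // ?dfp ?ac // subr_ge0 ltW //.
Qed.

Lemma key_pos (x : R) : 0 <= x -> expR x - 1 - x <= x ^+ 2 / 2 * expR x.
Proof.
move=> x0.
pose h (t : R) := (1 + t) * expR (- t) + t ^+ 2 / 2.
have hd (c : R) : is_derive c (1:R) h (c * (1 - expR (- c))).
  rewrite /h; apply: is_derive_eq.
  by rewrite !scaler0 /GRing.scale/=; field.
have : h 0 <= h x.
  move: x0; rewrite le_eqVlt => /predU1P[<- //|x0].
  apply: (@mvt_ge h (fun c => c * (1 - expR (- c))) _ _ x0 hd) => c /andP[c0 _].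
  apply: mulr_ge0; first exact: ltW.
  by rewrite subr_ge0 expR_le1 oppr_le0 ltW.
rewrite /h oppr0 expR0 expr0n /= mul0r !addr0 mulr1 => H.
have ex := expR_gt0 x.
have ey : expR x * expR (- x) = 1 by rewrite -expRD subrr expR0.
have := ler_pM2l ex; move=> /(_ 1 ((1 + x) * expR (- x) + x ^+ 2 / 2)) => /esym.
rewrite H => /esym H2.
have E : expR x * ((1 + x) * expR (- x) + x ^+ 2 / 2) = (1 + x) * (expR x * expR (- x)) + x ^+ 2 / 2 * expR x by ring.
move: H2; rewrite E ey mulr1 mulr1. lra.
Qed.

Lemma key_neg (x : R) : x <= 0 -> expR x - 1 - x <= x ^+ 2 / 2.
Proof.
move=> x0.
pose k (t : R) := t ^+ 2 / 2 + 1 + t - expR t.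
have kd (c : R) : is_derive c (1:R) (fun t => - k t) (expR c - 1 - c).
  rewrite /k; apply: is_derive_eq.
  by rewrite !scaler0 /GRing.scale/=; field.
have : - k x <= - k 0.
  move: x0; rewrite le_eqVlt => /predU1P[-> //|x0].
  apply: (@mvt_ge (fun t => - k t) (fun c => expR c - 1 - c) _ _ x0 kd) => c /andP[_ c0].
  have := expR_ge1Dx c. lra.
rewrite /k expR0 expr0n /= mul0r add0r addr0 subrr oppr0 oppr_le0 => H.
lra.
Qed.

Lemma taylor (x : R) : `|expR x - 1| <= `|x| + x ^+ 2 / 2 * expR `|x|.
Proof.
have e1 := expR_ge1Dx x.
have sq : 0 <= x ^+ 2 / 2 by rewrite mulr_ge0 // sqr_ge0.
have [x0|x0] := leP 0 x.
  rewrite ger0_norm ?ger0_norm //; last lra.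
  have := @key_pos x x0. lra.
rewrite (ltr0_norm x0).
have : x ^+ 2 / 2 <= x ^+ 2 / 2 * expR (- x).
  rewrite ler_peMr // -expR0 ler_expR; lra.
have := @key_neg x (ltW x0).
have [e0|e0] := leP 0 (expR x - 1).
  rewrite ger0_norm //. lra.
rewrite ltr0_norm //. lra.
Qed.


Lemma low1 (x : R) : expR (- `|x|) * `|x| <= `|expR x - 1|.
Proof.
have e1 := expR_ge1Dx x.
have ey : expR x * expR (- x) = 1 by rewrite -expRD subrr expR0.
have [x0|x0] := leP 0 x.
  rewrite !ger0_norm //; last lra.
  have : expR (- x) <= 1 by rewrite expR_le1 oppr_le0.
  move=> H. have : expR (- x) * x <= x by rewrite ler_piMl.
  lra.
rewrite (ltr0_norm x0) opprK ltr0_norm; last by rewrite subr_lt0 expR_lt1.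
have e2 := expR_ge1Dx (- x).
have ex := expR_gt0 x.
have : expR x * (1 - x) <= expR x * expR (- x) by rewrite ler_pM2l.
rewrite ey. lra.
Qed.

Lemma low2 (x c : R) : `|x| <= c -> `|x| / (1 + c) <= `|expR x - 1|.
Proof.
move=> xc.
have c0 : 0 <= c by apply: le_trans xc.
have c1 : 0 < 1 + c by lra.
have e1 := expR_ge1Dx x.
have ey : expR x * expR (- x) = 1 by rewrite -expRD subrr expR0.
rewrite ler_pdivrMr //.
have [x0|x0] := leP 0 x.
  rewrite !ger0_norm //; last lra.
  have : x <= (expR x - 1) by lra.
  move=> H; apply: le_trans H _. rewrite ler_peMr //; last lra. lra.
rewrite (ltr0_norm x0) ltr0_norm; last by rewrite subr_lt0 expR_lt1.
have e2 := expR_ge1Dx (- x).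
have ex := expR_gt0 x.
have : expR x * (1 - x) <= expR x * expR (- x) by rewrite ler_pM2l.
rewrite ey => H.
have : - x <= (1 - expR x) * (1 - x) by nra.
move=> H2; apply: le_trans H2 _.
have xc' : - x <= c by rewrite -(ltr0_norm x0).
have ee : 0 <= 1 - expR x by rewrite subr_ge0 expR_le1 ltW.
have hc : 0 <= c + x by lra.
have := mulr_ge0 ee hc. nra.
Qed.

Variable B : finType.

Lemma tv_bound (nu w : B -> R) : (forall b, 0 <= nu b) -> \sum_b nu b = 1 ->
  (forall b, 0 < w b) ->
  \sum_b `|nu b - nu b * w b / (\sum_c nu c * w c)| <=
  2 * \sum_b nu b * `|w b - 1|.
Proof.
move=> nu0 nu1 w0.
set S := \sum_c nu c * w c.
have S0 : 0 < S.
  rewrite lt_neqAle sumr_ge0; last by move=> b _; rewrite mulr_ge0 // ltW.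
  rewrite andbT eq_sym; apply/eqP => S0.
  have : \sum_b nu b * w b = 0 by [].
  move/eqP; rewrite psumr_eq0; last by move=> b _; rewrite mulr_ge0 // ltW.
  move/allP => H.
  move: nu1; rewrite big1 => [/eqP|b _]; first by rewrite eq_sym oner_eq0.
  have := H b (mem_index_enum b); rewrite implyTb.
  rewrite mulf_eq0 => /orP[/eqP //|]. by rewrite gt_eqF.
have step b : `|nu b - nu b * w b / S| <= nu b * `|w b - 1| + nu b * w b * `|1 - S^-1|.
  have -> : nu b - nu b * w b / S = nu b * (1 - w b) + nu b * w b * (1 - S^-1) by ring.
  apply: le_trans (ler_normD _ _) _.
  rewrite !normrM (ger0_norm (nu0 b)) (ger0_norm (ltW (w0 b))) distrC //.
apply: le_trans (ler_sum _ (fun b _ => step b)) _.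
rewrite big_split /= -mulr_suml.
have -> : S * `|1 - S^-1| = `|S - 1|.
  rewrite -{1}(ger0_norm (ltW S0)) -normrM mulrBr mulr1 divff ?gt_eqF //.
have : `|S - 1| <= \sum_b nu b * `|w b - 1|.
  rewrite -{1}nu1 /S -sumrB.
  apply: le_trans (ler_norm_sum _ _ _) _.
  apply: ler_sum => b _.
  by rewrite -{2}(mulr1 (nu b)) -mulrBr normrM ger0_norm.
lra.
Qed.


Lemma sup_ge (f : B -> R) b : `|f b| <= supnorm f.
Proof. by rewrite /supnorm (bigD1 b) //= le_max lexx. Qed.

Lemma sum_gt0 (b0 : B) {F : B -> R} : (forall b, 0 < F b) -> 0 < \sum_b F b.
Proof.
move=> F0; rewrite (bigD1 b0) //=.
apply: (lt_le_trans (F0 b0)); rewrite lerDl sumr_ge0 // => b _; exact: ltW.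
Qed.

Lemma softpolE (eta : R) (Q : B -> R) b : 0 < eta ->
  softpol eta Q b = expR (eta * Q b) / \sum_c expR (eta * Q c).
Proof.
move=> eta0.
have Z0 := sum_gt0 b (fun c => expR_gt0 (eta * Q c)).
rewrite /softpol /advantage /softV.
have -> : eta * (Q b - ln (\sum_c expR (eta * Q c)) / eta) =
   eta * Q b + - ln (\sum_c expR (eta * Q c)).
  by field; rewrite gt_eqF.
by rewrite expRD expRN lnK.
Qed.

Lemma part1 (eta : R) (Q Qt : B -> R) (xi : R) : 0 < eta ->
  dTV (softpol eta Q) (softpol eta Qt) <=
  eta * innerB (softpol eta Q) (fun b => `|Qt b - Q b - xi|
     + eta / 2 * expR (eta * `|Qt b - Q b - xi|) * (Qt b - Q b - xi) ^+ 2).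
Proof.
move=> eta0.
have [b0 _|Bempty] := pickP (@predT B); last first.
  rewrite /dTV /innerB !big_pred0 ?mulr0 //.
set nu := softpol eta Q.
set D := fun b => Qt b - Q b - xi.
set w := fun b => expR (eta * D b).
set S := \sum_c nu c * w c.
set Z := \sum_c expR (eta * Q c).
set Zt := \sum_c expR (eta * Qt c).
have Z0 : 0 < Z := sum_gt0 b0 (fun c => expR_gt0 (eta * Q c)).
have nuE b : nu b = expR (eta * Q b) / Z by rewrite /nu softpolE.
have nu0 b : 0 <= nu b by exact: expR_ge0.
have w0 b : 0 < w b by exact: expR_gt0.
have S0 : 0 < S by apply: (sum_gt0 b0) => b; rewrite nuE mulr_gt0 ?divr_gt0 ?expR_gt0.
have nu1 : \sum_b nu b = 1.
  under eq_bigr do rewrite nuE.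
  by rewrite -mulr_suml divff // gt_eqF.
have eQt b : expR (eta * Qt b) = expR (eta * Q b) * w b * expR (eta * xi).
  rewrite -!expRD; congr expR; rewrite /D; ring.
have ZtE : Zt = Z * S * expR (eta * xi).
  rewrite /Zt /S mulr_sumr mulr_suml; apply: eq_bigr => b _.
  rewrite eQt nuE; field; rewrite gt_eqF //.
have nutE b : softpol eta Qt b = nu b * w b / S.
  rewrite softpolE // -/Zt ZtE eQt nuE; field.
  by rewrite !gt_eqF ?expR_gt0.
have H := tv_bound nu w nu0 nu1 w0.
rewrite /dTV.
under eq_bigr do rewrite nutE.
apply: le_trans (_ : \sum_b nu b * `|w b - 1| <= _).
  rewrite -/S; lra.
rewrite /innerB mulr_sumr; apply: ler_sum => b _.
have T := taylor (eta * D b).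
rewrite normrM (gtr0_norm eta0) in T.
have -> : eta * (nu b * (`|D b| + eta / 2 * expR (eta * `|D b|) * D b ^+ 2)) =
  nu b * (eta * `|D b| + (eta * D b) ^+ 2 / 2 * expR (eta * `|D b|)) by ring.
exact: ler_wpM2l.
Qed.

End S.

Theorem mainTheorem10 (R : realType) (B : finType) (eta : R) (Q Qt : B -> R) :
  0 < eta ->
  let A := advantage eta Q in
  let At := advantage eta Qt in
  let nu := softpol eta Q in
  let nut := softpol eta Qt in
  (forall xi : R,
     let D := fun b => Qt b - Q b - xi in
     dTV nu nut <=
       eta * innerB nu (fun b => `|D b| + eta / 2 * expR (eta * `|D b|) * (D b) ^+ 2))
  /\ dTV nu nut <=
       eta * innerB nu (fun b => `|At b - A b|
                         + eta / 2 * expR (eta * `|At b - A b|) * (At b - A b) ^+ 2)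
  /\ 2^-1 * innerB nu (fun b => eta * expR (- (eta * `|At b - A b|)) * `|At b - A b|)
       <= dTV nu nut
  /\ (forall BA : R, 0 < BA -> Num.max (supnorm A) (supnorm At) <= BA ->
       eta / (2 * (1 + 2 * eta * BA)) * innerB nu (fun b => `|At b - A b|)
         <= dTV nu nut).
Proof.
move=> eta0 A At nu nut.
have nu0 b : 0 <= nu b by exact: expR_ge0.
have nutE b : nut b = nu b * expR (eta * (At b - A b)).
  by rewrite /nut /nu /softpol -expRD; congr expR; rewrite /At /A; ring.
have dTVE : dTV nu nut = 2^-1 * \sum_b nu b * `|expR (eta * (At b - A b)) - 1|.
  rewrite /dTV; congr (_ * _); apply: eq_bigr => b _.
  by rewrite nutE -{1}(mulr1 (nu b)) -mulrBr normrM ger0_norm // distrC.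
split; first by move=> xi; exact: part1.
split.
  have := @part1 R B eta Q Qt (softV eta Qt - softV eta Q) eta0.
  have eD b : Qt b - Q b - (softV eta Qt - softV eta Q) = At b - A b.
    by rewrite /At /A /advantage; ring.
  rewrite /innerB.
  by under eq_bigr do rewrite eD.
split.
  rewrite dTVE /innerB; apply: ler_wpM2l => //.
  apply: ler_sum => b _; apply: ler_wpM2l => //.
  have H := @low1 R (eta * (At b - A b)).
  rewrite normrM (gtr0_norm eta0) in H.
  have -> : eta * expR (- (eta * `|At b - A b|)) * `|At b - A b| =
     expR (- (eta * `|At b - A b|)) * (eta * `|At b - A b|) by ring.
  exact: H.
move=> BA BA0 hBA.
have hA1 b : `|A b| <= BA.
  apply: le_trans (@sup_ge R B A b) _; apply: le_trans hBA; by rewrite le_max lexx.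
have hA2 b : `|At b| <= BA.
  apply: le_trans (@sup_ge R B At b) _; apply: le_trans hBA; by rewrite le_max lexx orbT.
rewrite dTVE /innerB !mulr_sumr; apply: ler_sum => b _.
have hd : `|eta * (At b - A b)| <= 2 * eta * BA.
  rewrite normrM (gtr0_norm eta0) -mulrA (mulrC 2) -mulrA ler_pM2l //.
  apply: le_trans (ler_normB _ _) _.
  have := hA1 b; have := hA2 b; lra.
have H := @low2 R _ _ hd.
rewrite normrM (gtr0_norm eta0) in H.
have c1 : 0 < 1 + 2 * eta * BA.
  have : 0 < 2 * eta * BA by rewrite !mulr_gt0.
  lra.
have K := ler_wpM2l (mulr_ge0 (nu0 b) (_ : 0 <= 2^-1)) H.
have -> : eta / (2 * (1 + 2 * eta * BA)) * (nu b * `|At b - A b|) =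
   nu b * 2^-1 * (eta * `|At b - A b| / (1 + 2 * eta * BA)).
  by field; rewrite gt_eqF.
have -> : 2^-1 * (nu b * `|expR (eta * (At b - A b)) - 1|) =
   nu b * 2^-1 * `|expR (eta * (At b - A b)) - 1| by ring.
exact: K.
Qed.
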